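(* Let $\mathcal U$ be a finite set and $R$ an $n(R)$-place relation on $\mathcal U$. Then $\lambda_1(R)\le\lambda'_0(R)+1$, and if equality holds then $\lambda_1(R)\le 2^{2^{n(R)^2}}$.
   Context: For $a\in\mathcal U$ and $A\subseteq\mathcal U$, $\mathrm{tp}_{\mathrm{bs}}(a,A,R)$ is the set of formulas $\varphi(x,\bar a)$ with $\bar a$ a tuple from $A$ and $\varphi(x,\bar y)$ an atomic or negated atomic formula in the vocabulary $\{R,=\}$ such that $(\mathcal U,R)\models\varphi(a,\bar a)$. $\lambda_1(R)=\max_{A\subseteq\mathcal U}|\{\mathrm{tp}_{\mathrm{bs}}(a,A,R):a\in\mathcal U\setminus A\}|$. For $A\subseteq\mathcal U$ and $n(R)$-tuples $\bar b,\bar c$, $\bar b\approx_A\bar c$ means: $b_i\in A\iff c_i\in A$; $b_i\in A\Rightarrow b_i=c_i$; and $b_i=b_j\iff c_i=c_j$. $\lambda'_0(R)$ is the least $|A|$ over $A\subseteq\mathcal U$ such that $\bar b\approx_A\bar c$ implies ($R(\bar b)\iff R(\bar c)$) for all $n(R)$-tuples $\bar b,\bar c$ from $\mathcal U$. *)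

(* Defs.v *)
From mathcomp Require Import all_boot.
Set Implicit Arguments. Unset Strict Implicit. Unset Printing Implicit Defensive.

Section Types.
Variables (U : finType) (n : nat).

(* Terms in one free variable x with parameters from U:
   None = the variable x, Some c = the parameter c. *)
Definition term := option U.
(* Atomic formulas in the vocabulary {R, =}: t1 = t2, or R(t_1,...,t_n). *)
Definition atom := ((term * term) + n.-tuple term)%type.
(* Literal: atomic formula (true) or negated atomic formula (false). *)
Definition literal := (atom * bool)%type.

Definition eval_term (a : U) (t : term) : U :=
  match t with None => a | Some c => c end.

Definition atom_holds (R : n.-tuple U -> bool) (a : U) (f : atom) : bool :=
  match f with
  | inl (t1, t2) => eval_term a t1 == eval_term a t2
  | inr ts => R (map_tuple (eval_term a) ts)
  end.

Definition lit_holds R a (l : literal) : bool := atom_holds R a l.1 == l.2.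

Definition term_in (A : {set U}) (t : term) : bool :=
  match t with None => true | Some c => c \in A end.

Definition atom_params_in (A : {set U}) (f : atom) : bool :=
  match f with
  | inl (t1, t2) => term_in A t1 && term_in A t2
  | inr ts => all (term_in A) ts
  end.

Definition tp_bs (a : U) (A : {set U}) (R : n.-tuple U -> bool) : {set literal} :=
  [set l : literal | atom_params_in A l.1 && lit_holds R a l].

Definition lambda1 (R : n.-tuple U -> bool) : nat :=
  \max_(A : {set U}) #|[set tp_bs a A R | a in ~: A]|.

Definition approx (A : {set U}) (b c : n.-tuple U) : bool :=
  [forall i : 'I_n,
     [&& ((tnth b i \in A) == (tnth c i \in A)),
         ((tnth b i \in A) ==> (tnth b i == tnth c i)) &
         [forall j : 'I_n, (tnth b i == tnth b j) == (tnth c i == tnth c j)]]].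

Definition good (R : n.-tuple U -> bool) (A : {set U}) : bool :=
  [forall b : n.-tuple U, forall c : n.-tuple U, approx A b c ==> (R b == R c)].

(* lambda'_0(R): least |A| with A good. The default #|U| is harmless since
   setT is always good and has size #|U|. *)
Definition lambda0' (R : n.-tuple U -> bool) : nat :=
  \big[minn/#|U|]_(A : {set U} | good R A) #|A|.

End Types.

(* Main.v *)
Require Import Defs.
From mathcomp Require Import all_boot.
Set Implicit Arguments. Unset Strict Implicit. Unset Printing Implicit Defensive.

Section Proofs.
Variables (U : finType) (n : nat) (R : n.-tuple U -> bool).

Lemma eval_inj (A : {set U}) a t1 t2 : a \notin A -> term_in A t1 -> term_in A t2 ->
  (eval_term a t1 == eval_term a t2) = (t1 == t2).
Proof.
move=> aA; case: t1 => [c1|] /=; case: t2 => [c2|] //= h1 h2; rewrite ?eqxx //.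
- by apply/negbTE; apply: contra aA => /eqP <-.
- by apply/negbTE; apply: contra aA => /eqP ->.
Qed.

Lemma gen_inv (A B : {set U}) a a' (ts ts' : n.-tuple (term U)) :
  good R B -> a \notin A -> a' \notin A ->
  all (term_in A) ts -> all (term_in A) ts' ->
  (forall i, (eval_term a (tnth ts i) \in B) = (eval_term a' (tnth ts' i) \in B)) ->
  (forall i, eval_term a (tnth ts i) \in B -> eval_term a (tnth ts i) = eval_term a' (tnth ts' i)) ->
  (forall i j, (tnth ts i == tnth ts j) = (tnth ts' i == tnth ts' j)) ->
  R (map_tuple (eval_term a) ts) = R (map_tuple (eval_term a') ts').
Proof.
move=> /forallP gB aA a'A hts hts' H1 H2 H3.
have /forallP /(_ (map_tuple (eval_term a') ts')) /implyP := gB (map_tuple (eval_term a) ts).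
move=> h; apply/eqP; apply: h; apply/forallP => i.
rewrite !tnth_map H1 eqxx /=; apply/andP; split.
  by apply/implyP => h; rewrite -H1 in h; rewrite (H2 _ h).
apply/forallP => j; rewrite !tnth_map.
have ti := all_tnthP hts i; have tj := all_tnthP hts j.
have ti' := all_tnthP hts' i; have tj' := all_tnthP hts' j.
by rewrite (eval_inj aA ti tj) (eval_inj a'A ti' tj') H3.
Qed.

Lemma outside_same (A B : {set U}) a a' : good R B -> a \notin A -> a' \notin A ->
  a \notin B -> a' \notin B -> tp_bs a A R = tp_bs a' A R.
Proof.
move=> gB aA a'A aB a'B; apply/setP => l; rewrite !inE.
case hp: (atom_params_in A l.1) => //=; rewrite /lit_holds.
case: l hp => [[[t1 t2]|ts] b] /= hp.
  by case/andP: hp => h1 h2; rewrite (eval_inj aA h1 h2) (eval_inj a'A h1 h2).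
rewrite (gen_inv gB aA a'A hp hp) // => i; case: (tnth ts i) => //=.
  by rewrite (negbTE aB) (negbTE a'B).
by rewrite (negbTE aB).
Qed.

Lemma count_types (A B : {set U}) : good R B ->
  #|[set tp_bs a A R | a in ~: A]| <= #|B :\: A| + 1.
Proof.
move=> gB.
have -> : ~: A = (~: A :&: B) :|: (~: A :\: B).
  by rewrite setID.
rewrite imsetU; apply: leq_trans (leq_card_setU _ _) _; apply: leq_add.
  by apply: leq_trans (leq_imset_card _ _) _; rewrite setDE setIC.
case: (set_0Vmem (~: A :\: B)) => [->|[a0 Ha0]]; first by rewrite imset0 cards0.
rewrite -(cards1 (tp_bs a0 A R)); apply: subset_leq_card.
apply/subsetP => y /imsetP [a Ha ->]; rewrite inE; apply/eqP.
move: Ha Ha0; rewrite !inE => /andP[aB aA] /andP[a0B a0A].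
exact: (outside_same gB aA a0A aB a0B).
Qed.

Definition key (ts : n.-tuple (term U)) : {ffun 'I_n * 'I_n -> bool} :=
  [ffun p : 'I_n * 'I_n => if p.1 == p.2 then tnth ts p.1 == None
                           else tnth ts p.1 == tnth ts p.2].

Lemma key_eq (ts ts' : n.-tuple (term U)) i j : key ts = key ts' ->
  (tnth ts i == tnth ts j) = (tnth ts' i == tnth ts' j).
Proof.
move=> /ffunP /(_ (i, j)); rewrite !ffunE /=.
by case: eqP => [->|_] //; rewrite !eqxx.
Qed.

Lemma key_none (ts ts' : n.-tuple (term U)) i : key ts = key ts' -> (tnth ts i == None) = (tnth ts' i == None).
Proof. by move=> /ffunP /(_ (i, i)); rewrite !ffunE /= eqxx. Qed.

Lemma key_inv (A B : {set U}) a (ts ts' : n.-tuple (term U)) : good R B -> A :&: B = set0 -> a \notin A ->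
  all (term_in A) ts -> all (term_in A) ts' -> key ts = key ts' ->
  R (map_tuple (eval_term a) ts) = R (map_tuple (eval_term a) ts').
Proof.
move=> gB dAB aA hts hts' hk.
have notB t : term_in A t -> (eval_term a t \in B) = (t == None) && (a \in B).
  case: t => [c|] /= cA; last by [].
  have cB : c \notin B.
    apply/negP => cB; have : c \in A :&: B by rewrite inE cA cB.
    by rewrite dAB inE.
  by rewrite (negbTE cB).
apply: (gen_inv gB aA aA hts hts').
- move=> i; rewrite (notB _ (all_tnthP hts i)) (notB _ (all_tnthP hts' i)).
  by rewrite (key_none i hk).
- move=> i; rewrite (notB _ (all_tnthP hts i)) => /andP[/eqP h _].
  by move: (key_none i hk); rewrite h eqxx => /esym/eqP ->.
- by move=> i j; apply: key_eq.
Qed.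

Definition gfun (A : {set U}) a : {ffun {ffun 'I_n * 'I_n -> bool} -> bool} :=
  [ffun k => [exists ts : n.-tuple (term U),
     [&& all (term_in A) ts, key ts == k & R (map_tuple (eval_term a) ts)]]].

Definition atom_val (f : {ffun {ffun 'I_n * 'I_n -> bool} -> bool}) (x : atom U n) : bool :=
  match x with
  | inl (t1, t2) => t1 == t2
  | inr ts => f (key ts)
  end.

Definition hset (A : {set U}) f : {set literal U n} :=
  [set l : literal U n | atom_params_in A l.1 && (atom_val f l.1 == l.2)].

Lemma tp_h (A B : {set U}) a : good R B -> A :&: B = set0 -> a \notin A ->
  tp_bs a A R = hset A (gfun A a).
Proof.
move=> gB dAB aA; apply/setP => l; rewrite !inE.
case hp: (atom_params_in A l.1) => //=; rewrite /lit_holds.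
case: l hp => [[[t1 t2]|ts] b] /= hp.
  by case/andP: hp => h1 h2; rewrite (eval_inj aA h1 h2).
rewrite ffunE; congr (_ == b); apply/idP/existsP.
  by move=> h; exists ts; rewrite hp eqxx h.
case=> ts' /and3P [h1 /eqP h2 h3].
by rewrite -(key_inv gB dAB aA h1 hp h2).
Qed.

Lemma setT_good : good R setT.
Proof.
apply/forallP => b; apply/forallP => c; apply/implyP => /forallP h.
suff -> : b = c by [].
apply: eq_from_tnth => i; have /and3P [_ e _] := h i.
by rewrite inE /= in e; apply/eqP.
Qed.

Lemma lambda0_wit : exists2 B, good R B & #|B| = lambda0' R.
Proof.
rewrite /lambda0'.
apply: (big_ind (fun x => exists2 B, good R B & #|B| = x)).
- by exists setT; [exact: setT_good | rewrite cardsT].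
- move=> x y [B1 g1 e1] [B2 g2 e2]; rewrite /minn; case: ltnP => _.
    by exists B1. by exists B2.
- by move=> B gB; exists B.
Qed.

Lemma lambda1_wit : exists A, lambda1 R = #|[set tp_bs a A R | a in ~: A]|.
Proof.
rewrite /lambda1.
apply: (big_ind (fun x => exists A, x = #|[set tp_bs a A R | a in ~: A]|)).
- by exists setT; rewrite setCT imset0 cards0.
- move=> x y [A1 e1] [A2 e2]; rewrite /maxn; case: ltnP => _.
    by exists A2. by exists A1.
- by move=> A _; exists A.
Qed.

End Proofs.

Theorem fact3p2 (U : finType) (n : nat) (R : n.-tuple U -> bool) :
  lambda1 R <= lambda0' R + 1 /\
  (lambda1 R = lambda0' R + 1 -> lambda1 R <= 2 ^ (2 ^ (n ^ 2))).
Proof.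
have [B gB eB] := lambda0_wit R.
have [A eA] := lambda1_wit R.
have H1 : lambda1 R <= lambda0' R + 1.
  rewrite eA -eB; apply: leq_trans (count_types A gB) _.
  by rewrite leq_add2r subset_leq_card // subsetDl.
split=> // heq.
have dAB : A :&: B = set0.
  have h := count_types A gB; rewrite -eA heq -eB leq_add2r in h.
  have eq : B :\: A = B by apply/eqP; rewrite eqEcard subsetDl h.
  apply/setP => x; rewrite !inE; apply/negbTE/andP => [[xA xB]].
  by move: xB; rewrite -eq inE xA.
rewrite eA.
have -> : [set tp_bs a A R | a in ~: A] = [set hset A f | f in [set gfun R A a | a in ~: A]].
  rewrite -imset_comp; apply: eq_in_imset => a; rewrite inE => aA /=.
  exact: tp_h gB dAB aA.
apply: leq_trans (leq_imset_card _ _) _.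
apply: leq_trans (max_card _) _.
by rewrite card_ffun card_bool card_ffun card_prod card_bool !card_ord.
Qed.
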